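(* Let $W_1,W_2,W_3\in\mathbb R^{n\times n}$, $J\in\mathbb R^n$, and $\Phi:\mathbb R^n\to\mathbb R^n$ with $\|\Phi(x)-\Phi(y)\|\le\|W_3(x-y)\|$ for all $x,y$ (Euclidean norm). Let $x^\star\in\mathbb R^n$ satisfy $W_1x^\star+W_2\Phi(x^\star)+J=0$. Suppose there exist $\delta>0$ and $\varepsilon>0$ with $$\tfrac12\big(W_1+W_1^T+\varepsilon W_2W_2^T+\varepsilon^{-1}W_3^TW_3\big)\le\delta I$$ (in the positive semidefinite order). Let $\epsilon_1,\epsilon_2>0$, $0<p<1$, $q>1$, $\bar\alpha=\epsilon_12^{(1+p)/2}$, $\bar\beta=\epsilon_2n^{(1-q)/2}2^{(1+q)/2}$, and assume $\bar\alpha-2\delta>0$, $\bar\beta-2\delta>0$. Then every solution of $$\dot x=W_1x+W_2\Phi(x)+J-\epsilon_1\mathrm{sig}^p(x-x^\star)-\epsilon_2\mathrm{sig}^q(x-x^\star)$$ satisfies $x(t)=x^\star$ for all $t\ge T_{\max}=\frac{2}{(\bar\alpha-2\delta)(1-p)}+\frac{2}{(\bar\beta-2\delta)(q-1)}$, whatever the initial value.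
   Context: For $x\in\mathbb R^n$ and $r>0$, $\mathrm{sig}^r(x)=(\mathrm{sign}(x^1)|x^1|^r,\dots,\mathrm{sign}(x^n)|x^n|^r)^T$. *)

(* Defs.v *)
From Stdlib Require Import Reals Lra.
Open Scope R_scope.

(* Vectors in R^n are represented as nat -> R (only indices < n matter);
   n x n matrices as nat -> nat -> R (only indices < n matter). *)
Definition vec := nat -> R.
Definition mat := nat -> nat -> R.

Fixpoint rsum (n : nat) (f : nat -> R) : R :=
  match n with
  | O => 0
  | S m => rsum m f + f m
  end.

Definition dot (n : nat) (u v : vec) : R := rsum n (fun i => u i * v i).
Definition vnorm (n : nat) (u : vec) : R := sqrt (dot n u u).

Definition vsub (u v : vec) : vec := fun i => u i - v i.
Definition matvec (n : nat) (A : mat) (x : vec) : vec :=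
  fun i => rsum n (fun j => A i j * x j).

Definition transp (A : mat) : mat := fun i j => A j i.
Definition mmul (n : nat) (A B : mat) : mat :=
  fun i j => rsum n (fun k => A i k * B k j).
Definition madd (A B : mat) : mat := fun i j => A i j + B i j.
Definition mscale (c : R) (A : mat) : mat := fun i j => c * A i j.
Definition idmat : mat := fun i j => if Nat.eqb i j then 1 else 0.

Definition loewner_le (n : nat) (A B : mat) : Prop :=
  forall v : vec, 0 <= dot n v (matvec n (fun i j => B i j - A i j) v).

Definition sigr (r v : R) : R :=
  if Rlt_dec 0 v then Rpower v r
  else if Rlt_dec v 0 then - Rpower (- v) r
  else 0.

Definition sig (r : R) (x : vec) : vec := fun i => sigr r (x i).

(* Main.v *)
Require Import Defs.
From Stdlib Require Import Reals Lra Lia FunctionalExtensionality.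
Open Scope R_scope.

Lemma rsum_ext n f g : (forall i, (i < n)%nat -> f i = g i) -> rsum n f = rsum n g.
Proof. induction n; simpl; intros H; auto. rewrite IHn by (intros; apply H; lia). rewrite H by lia. auto. Qed.

Lemma rsum_add n f g : rsum n (fun i => f i + g i) = rsum n f + rsum n g.
Proof. induction n; simpl; [lra|]. rewrite IHn; lra. Qed.

Lemma rsum_scal n c f : rsum n (fun i => c * f i) = c * rsum n f.
Proof. induction n; simpl; [lra|]. rewrite IHn; lra. Qed.

Lemma rsum_opp n f : rsum n (fun i => - f i) = - rsum n f.
Proof. induction n; simpl; [lra|]. rewrite IHn; lra. Qed.

Lemma rsum_sub n f g : rsum n (fun i => f i - g i) = rsum n f - rsum n g.
Proof. induction n; simpl; [lra|]. rewrite IHn; lra. Qed.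

Lemma rsum_const n c : rsum n (fun _ => c) = INR n * c.
Proof. induction n; simpl rsum; [simpl; lra|]. rewrite IHn, S_INR; lra. Qed.

Lemma rsum_le n f g : (forall i, (i < n)%nat -> f i <= g i) -> rsum n f <= rsum n g.
Proof. induction n; simpl; intros H; [lra|]. assert (f n <= g n) by (apply H; lia).
  assert (rsum n f <= rsum n g) by (apply IHn; intros; apply H; lia). lra. Qed.

Lemma rsum_nonneg n f : (forall i, (i < n)%nat -> 0 <= f i) -> 0 <= rsum n f.
Proof. intros H. replace 0 with (rsum n (fun _ => 0)). apply rsum_le; auto.
  rewrite rsum_const; lra. Qed.

Lemma rsum_term n f k : (forall i, (i < n)%nat -> 0 <= f i) -> (k < n)%nat -> f k <= rsum n f.
Proof. induction n; simpl; intros H Hk; [lia|].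
  assert (0 <= rsum n f) by (apply rsum_nonneg; intros; apply H; lia).
  destruct (Nat.eq_dec k n). subst; lra.
  assert (f k <= rsum n f) by (apply IHn; [intros; apply H|]; lia).
  assert (0 <= f n) by (apply H; lia). lra. Qed.

Lemma rsum_zero n f : (forall i, (i < n)%nat -> 0 <= f i) -> rsum n f = 0 -> forall i, (i < n)%nat -> f i = 0.
Proof. intros H H0 i Hi. assert (f i <= rsum n f) by (apply rsum_term; auto).
  assert (0 <= f i) by auto. lra. Qed.

Lemma rsum_swap n m (f : nat -> nat -> R) :
  rsum n (fun i => rsum m (fun j => f i j)) = rsum m (fun j => rsum n (fun i => f i j)).
Proof. induction n; simpl. rewrite rsum_const; simpl; lra.
  rewrite IHn, <- rsum_add. auto. Qed.

Lemma dot_comm n u v : dot n u v = dot n v u.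
Proof. unfold dot. apply rsum_ext; intros; ring. Qed.

Lemma dot_transp n u A w : dot n u (matvec n A w) = dot n (matvec n (transp A) u) w.
Proof. unfold dot, matvec, transp.
  transitivity (rsum n (fun i => rsum n (fun j => u i * A i j * w j))).
  apply rsum_ext; intros. rewrite <- rsum_scal. apply rsum_ext; intros; ring.
  rewrite rsum_swap. apply rsum_ext; intros.
  rewrite Rmult_comm, <- rsum_scal. apply rsum_ext; intros; ring. Qed.

Lemma matvec_mmul n A B v i : matvec n (mmul n A B) v i = matvec n A (matvec n B v) i.
Proof. unfold matvec, mmul.
  transitivity (rsum n (fun j => rsum n (fun k => A i k * B k j * v j))).
  apply rsum_ext; intros. rewrite Rmult_comm, <- rsum_scal. apply rsum_ext; intros; ring.
  rewrite rsum_swap. apply rsum_ext; intros. rewrite <- rsum_scal. apply rsum_ext; intros; ring. Qed.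

Definition qf n M v := dot n v (matvec n M v).

Lemma qf_lin2 n M A B a b v : (forall i j, M i j = a * A i j + b * B i j) ->
  qf n M v = a * qf n A v + b * qf n B v.
Proof. intros H. unfold qf, dot, matvec. rewrite <- !rsum_scal, <- rsum_add.
  apply rsum_ext; intros i _.
  transitivity (v i * (a * rsum n (fun j => A i j * v j) + b * rsum n (fun j => B i j * v j))); [|ring].
  f_equal. rewrite <- !rsum_scal, <- rsum_add. apply rsum_ext; intros j _. rewrite H; ring. Qed.

Lemma qf_id n v : qf n idmat v = dot n v v.
Proof. unfold qf, dot. apply rsum_ext; intros i Hi. f_equal. unfold matvec, idmat.
  clear -Hi. induction n; [lia|]. simpl.
  destruct (Nat.eq_dec i n).
  - subst. rewrite Nat.eqb_refl. rewrite (rsum_ext _ _ (fun _ => 0)). rewrite rsum_const; ring.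
    intros j Hj. destruct (Nat.eqb_spec n j); [lia|ring].
  - rewrite IHn by lia. destruct (Nat.eqb_spec i n); [lia|ring]. Qed.

Lemma qf_transp n A v : qf n (transp A) v = qf n A v.
Proof. unfold qf. rewrite dot_transp, dot_comm. reflexivity. Qed.

Lemma qf_mmul n A B v : qf n (mmul n A B) v = dot n (matvec n (transp A) v) (matvec n B v).
Proof. unfold qf. rewrite <- dot_transp. unfold dot. apply rsum_ext; intros.
  rewrite matvec_mmul; auto. Qed.

Definition pw (y r : R) := if Rlt_dec 0 y then Rpower y r else 0.

Lemma pw_nonneg y r : 0 <= pw y r.
Proof. unfold pw, Rpower; destruct (Rlt_dec 0 y); [left; apply exp_pos|lra]. Qed.
Lemma pw_pos y r : 0 < y -> pw y r = Rpower y r.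
Proof. unfold pw; destruct (Rlt_dec 0 y); lra. Qed.
Lemma pw_0 r : pw 0 r = 0.
Proof. unfold pw; destruct (Rlt_dec 0 0); lra. Qed.

Lemma exp_le x y : x <= y -> exp x <= exp y.
Proof. intros [H|H]; [left; apply exp_increasing; auto| subst; lra]. Qed.
Lemma ln_le' x y : 0 < x -> x <= y -> ln x <= ln y.
Proof. intros Hx [H|H]; [left; apply ln_increasing; auto| subst; lra]. Qed.

Lemma Rpower_pos x r : 0 < Rpower x r.
Proof. apply exp_pos. Qed.

Lemma Rpower_sq e r : 0 < e -> e * Rpower e r = Rpower (e*e) ((1+r)/2).
Proof. intros He. rewrite <- Rpower_mult_distr by auto. rewrite <- Rpower_plus.
  replace ((1+r)/2 + (1+r)/2) with (1 + r) by field. rewrite Rpower_plus, Rpower_1; auto. Qed.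

Lemma esig e r : e * sigr r e = pw (e*e) ((1+r)/2).
Proof. unfold sigr. destruct (Rlt_dec 0 e).
  - rewrite pw_pos by nra. apply Rpower_sq; auto.
  - destruct (Rlt_dec e 0).
    + rewrite pw_pos by nra. replace (e*e) with ((-e)*(-e)) by ring.
      rewrite <- Rpower_sq by lra. ring.
    + replace e with 0 by lra. rewrite Rmult_0_l, pw_0; ring. Qed.

Lemma Rpower_le1 x P : 0 < x <= 1 -> P <= 1 -> x <= Rpower x P.
Proof. intros Hx HP. rewrite <- (Rpower_1 x) at 1 by lra. unfold Rpower. apply exp_le.
  assert (ln x <= 0) by (rewrite <- ln_1; apply ln_le'; lra). nra. Qed.

Lemma Rpower_ge1 x Q : 1 <= x -> 1 <= Q -> x <= Rpower x Q.
Proof. intros Hx HQ. rewrite <- (Rpower_1 x) at 1 by lra. unfold Rpower. apply exp_le.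
  assert (0 <= ln x) by (rewrite <- ln_1; apply ln_le'; lra). nra. Qed.

Lemma claim1 n a P : (forall i, (i < n)%nat -> 0 <= a i) -> 0 < P <= 1 ->
  pw (rsum n a) P <= rsum n (fun i => pw (a i) P).
Proof. intros Ha HP. set (S := rsum n a).
  assert (0 <= S) by (apply rsum_nonneg; auto).
  destruct (Req_dec S 0) as [E|NE].
  - rewrite E, pw_0. apply rsum_nonneg; intros; apply pw_nonneg.
  - assert (HS : 0 < S) by lra.
    apply Rle_trans with (rsum n (fun i => pw S P * (a i / S))).
    + rewrite rsum_scal. unfold Rdiv. rewrite (rsum_ext _ _ (fun i => /S * a i)) by (intros; ring).
      rewrite rsum_scal. fold S. right. field. lra.
    + apply rsum_le; intros i Hi. assert (a i <= S) by (apply rsum_term; auto).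
      destruct (Ha i Hi) as [Hai|Hai].
      * rewrite !pw_pos by auto.
        replace (Rpower (a i) P) with (Rpower S P * Rpower (a i / S) P).
        apply Rmult_le_compat_l. left; apply Rpower_pos.
        apply Rpower_le1. split. apply Rdiv_lt_0_compat; auto.
        apply Rmult_le_reg_r with S; auto. unfold Rdiv; rewrite Rmult_assoc, Rinv_l; lra. lra.
        rewrite Rpower_mult_distr. f_equal. field; lra. auto. apply Rdiv_lt_0_compat; auto.
      * rewrite <- Hai, pw_0. unfold Rdiv; rewrite Rmult_0_l, Rmult_0_r; lra. Qed.

Lemma bernoulli x Q : 0 < x -> 1 <= Q -> 1 + Q * (x - 1) <= Rpower x Q.
Proof. intros Hx HQ. set (M := ln x). set (A := Q * M).
  assert (H1 := exp_ineq1_le (A - M)). assert (H2 := exp_ineq1_le (0 - M)).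
  assert (E1 : exp A = exp M * exp (A - M)) by (rewrite <- exp_plus; f_equal; ring).
  assert (E2 : 1 = exp M * exp (0 - M)) by (rewrite <- exp_plus, <- exp_0; f_equal; ring).
  assert (EM : exp M = x) by (apply exp_ln; auto).
  assert (Rpower x Q = exp A) by reflexivity.
  (* (1/Q) exp A + (1 - 1/Q) *1 >= exp M *)
  assert (exp A >= x * (1 + (A - M))) by (rewrite E1, EM; apply Rle_ge, Rmult_le_compat_l; lra).
  assert (1 >= x * (1 + (0 - M))) by (rewrite E2 at 1; rewrite EM; apply Rle_ge, Rmult_le_compat_l; lra).
  unfold A in *. nra. Qed.

Lemma tangent a m Q : 0 <= a -> 0 < m -> 1 <= Q ->
  Rpower m Q + Q * Rpower m (Q - 1) * (a - m) <= pw a Q.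
Proof. intros Ha Hm HQ.
  assert (E : Rpower m (Q - 1) = Rpower m Q / m).
  { unfold Rminus. rewrite Rpower_plus, Rpower_Ropp, Rpower_1 by auto. reflexivity. }
  rewrite E. destruct Ha as [Ha|Ha].
  - rewrite pw_pos by auto.
    replace (Rpower a Q) with (Rpower m Q * Rpower (a/m) Q).
    2:{ rewrite Rpower_mult_distr. f_equal. field; lra. auto. apply Rdiv_lt_0_compat; auto. }
    assert (B := bernoulli (a/m) Q (Rdiv_lt_0_compat _ _ Ha Hm) HQ).
    assert (HP := Rpower_pos m Q).
    replace (Rpower m Q + Q * (Rpower m Q / m) * (a - m)) with (Rpower m Q * (1 + Q * (a/m - 1))) by (field; lra).
    apply Rmult_le_compat_l; lra.
  - subst. rewrite pw_0. assert (HP := Rpower_pos m Q).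
    replace (Rpower m Q + Q * (Rpower m Q / m) * (0 - m)) with (Rpower m Q * (1 - Q)) by (field; lra).
    nra. Qed.

Lemma claim2 n a Q : (forall i, (i < n)%nat -> 0 <= a i) -> 1 <= Q ->
  Rpower (INR n) (1 - Q) * pw (rsum n a) Q <= rsum n (fun i => pw (a i) Q).
Proof. intros Ha HQ. set (S := rsum n a).
  assert (0 <= S) by (apply rsum_nonneg; auto).
  destruct (Req_dec S 0) as [E|NE].
  - rewrite E, pw_0, Rmult_0_r. apply rsum_nonneg; intros; apply pw_nonneg.
  - assert (HS : 0 < S) by lra.
    assert (Hn : (0 < n)%nat). { destruct n; [|lia]. unfold S in HS; simpl in HS; lra. }
    assert (HnR : 0 < INR n) by (apply lt_0_INR; auto).
    set (m := S / INR n). assert (Hm : 0 < m) by (apply Rdiv_lt_0_compat; auto).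
    apply Rle_trans with (rsum n (fun i => Rpower m Q + Q * Rpower m (Q - 1) * (a i - m))).
    + rewrite rsum_add, rsum_const, rsum_scal, rsum_sub, rsum_const. fold S.
      replace (S - INR n * m) with 0 by (unfold m; field; lra).
      rewrite pw_pos by auto. unfold m. rewrite Rmult_0_r, Rplus_0_r.
      unfold Rdiv. rewrite <- Rpower_mult_distr by (auto; apply Rinv_0_lt_compat; auto).
      replace (Rpower (/ INR n) Q) with (Rpower (INR n) (-Q)).
      2:{ unfold Rpower. rewrite ln_Rinv by auto. f_equal; ring. }
      replace (1 - Q) with (1 + - Q) by ring. rewrite Rpower_plus, Rpower_1 by auto. right; ring.
    + apply rsum_le; intros. apply tangent; auto. Qed.

Lemma mvt_le f f' a b L : a < b -> (forall c, a<=c<=b -> derivable_pt_lim f c (f' c)) ->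
  (forall c, a<c<b -> f' c <= L) -> f b - f a <= L*(b-a).
Proof. intros Hab Hd HL. destruct (MVT_cor2 f f' a b Hab Hd) as [c [E Hc]].
  rewrite E. apply Rmult_le_compat_r; [lra|auto]. Qed.

Lemma mvt_ge f f' a b L : a < b -> (forall c, a<=c<=b -> derivable_pt_lim f c (f' c)) ->
  (forall c, a<c<b -> L <= f' c) -> L*(b-a) <= f b - f a.
Proof. intros Hab Hd HL. destruct (MVT_cor2 f f' a b Hab Hd) as [c [E Hc]].
  rewrite E. apply Rmult_le_compat_r; [lra|auto]. Qed.

Lemma deriv_rpow U D t r : derivable_pt_lim U t (D) -> 0 < U t ->
  derivable_pt_lim (fun s => Rpower (U s) r) t (r * Rpower (U t) (r - 1) * D).
Proof. intros H Hp. rewrite Rmult_assoc. rewrite <- (Rmult_assoc r).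
  apply (derivable_pt_lim_comp U (fun y => Rpower y r)); auto.
  apply derivable_pt_lim_power; auto. Qed.

Lemma Rpower_m1 x r : 0 < x -> Rpower x (r - 1 - r) = / x.
Proof. intros. replace (r - 1 - r) with (-(1)) by ring. rewrite Rpower_Ropp, Rpower_1; auto. Qed.

Lemma comparison (U D : R -> R) (c1 c2 P Q : R) : 0 < c1 -> 0 < c2 -> 0 < P < 1 -> 1 < Q ->
  (forall t, 0 < t -> derivable_pt_lim U t (D t)) ->
  (forall t, 0 < t -> 0 <= U t) ->
  (forall t, 0 < t -> D t <= - c1 * pw (U t) P) ->
  (forall t, 0 < t -> D t <= - c2 * pw (U t) Q) ->
  forall tau, 0 < tau -> U (tau + 1/(c2*(Q-1)) + 1/(c1*(1-P))) = 0.
Proof. intros Hc1 Hc2 HP HQ Hd Hnn H1 H2 tau Htau.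
  assert (Dneg : forall t, 0 < t -> D t <= 0).
  { intros t Ht. specialize (H1 t Ht). assert (X := pw_nonneg (U t) P). nra. }
  assert (Mono : forall s t, 0 < s -> s <= t -> U t <= U s).
  { intros s t Hs [Hst|Hst]; [|subst; lra].
    assert (U t - U s <= 0 * (t - s)); [|lra].
    apply mvt_le with D; auto. intros; apply Hd; lra. intros; apply Dneg; lra. }
  set (T2 := 1/(c2*(Q-1))). set (T1 := 1/(c1*(1-P))).
  assert (HT2 : 0 < T2) by (unfold T2; apply Rdiv_lt_0_compat; nra).
  assert (HT1 : 0 < T1) by (unfold T1; apply Rdiv_lt_0_compat; nra).
  set (t1 := tau + T2).
  assert (Ht1 : U t1 <= 1).
  { destruct (Rle_lt_dec (U t1) 0) as [Z|Pos]; [lra|].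
    assert (Upos : forall s, tau <= s <= t1 -> 0 < U s).
    { intros s Hs. assert (U t1 <= U s) by (apply Mono; lra). lra. }
    assert (G : (Q - 1) * c2 * (t1 - tau) <= Rpower (U t1) (1 - Q) - Rpower (U tau) (1 - Q)).
    { apply (mvt_ge (fun s => Rpower (U s) (1 - Q))) with (f' := fun s => (1 - Q) * Rpower (U s) (1 - Q - 1) * D s).
      unfold t1; lra.
      intros c Hc. apply deriv_rpow. apply Hd; lra. apply Upos; lra.
      intros c Hc. assert (Uc : 0 < U c) by (apply Upos; lra).
      replace (1 - Q - 1) with (-Q) by ring. rewrite Rpower_Ropp.
      specialize (H2 c ltac:(lra)). rewrite pw_pos in H2 by auto.
      assert (RP := Rpower_pos (U c) Q). set (R0 := Rpower (U c) Q) in *.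
      assert (/R0 * R0 = 1) by (field; lra). assert (0 < /R0) by (apply Rinv_0_lt_compat; auto).
      assert (0 <= (Q-1) * /R0 * (-c2*R0 - D c)) by (apply Rmult_le_pos; nra).
      assert (E: (Q-1)*/R0*(-c2*R0 - D c) = -(Q-1)*c2*(/R0*R0) - (Q-1)*/R0*D c) by ring.
      rewrite H in E. lra. }
    replace (t1 - tau) with T2 in G by (unfold t1; ring).
    replace ((Q - 1) * c2 * T2) with 1 in G by (unfold T2; field; split; apply Rgt_not_eq; lra).
    assert (X := Rpower_pos (U tau) (1 - Q)).
    destruct (Rle_lt_dec 1 (U t1)) as [Ge|Lt]; [|lra].
    assert (Rpower (U t1) (1 - Q) <= 1).
    { apply Rle_trans with (exp 0); [|rewrite exp_0; lra]. unfold Rpower. apply exp_le.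
      assert (0 <= ln (U t1)) by (rewrite <- ln_1; apply ln_le'; lra).
      assert (0 <= (Q-1) * ln (U t1)) by (apply Rmult_le_pos; lra). lra. }
    lra. }
  destruct (Rle_lt_dec (U (t1 + T1)) 0) as [Z|Pos].
  { assert (0 <= U (t1 + T1)) by (apply Hnn; unfold t1; lra). unfold t1 in *. lra. }
  exfalso.
  assert (Upos : forall s, t1 <= s <= t1 + T1 -> 0 < U s).
  { intros s Hs. assert (U (t1 + T1) <= U s) by (apply Mono; unfold t1 in *; lra). lra. }
  assert (G : Rpower (U (t1 + T1)) (1 - P) - Rpower (U t1) (1 - P) <= (-(1 - P) * c1) * (t1 + T1 - t1)).
  { apply (mvt_le (fun s => Rpower (U s) (1 - P))) with (f' := fun s => (1 - P) * Rpower (U s) (1 - P - 1) * D s).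
    lra.
    intros c Hc. apply deriv_rpow. apply Hd; unfold t1 in *; lra. apply Upos; lra.
    intros c Hc. assert (Uc : 0 < U c) by (apply Upos; lra).
    replace (1 - P - 1) with (-P) by ring. rewrite Rpower_Ropp.
    specialize (H1 c ltac:(unfold t1 in *; lra)). rewrite pw_pos in H1 by auto.
    assert (RP := Rpower_pos (U c) P). set (R0 := Rpower (U c) P) in *.
    assert (/R0 * R0 = 1) by (field; lra). assert (0 < /R0) by (apply Rinv_0_lt_compat; auto).
    assert (0 <= (1-P) * /R0 * (-c1*R0 - D c)) by (apply Rmult_le_pos; nra).
    assert (E: (1-P)*/R0*(-c1*R0 - D c) = -(1-P)*c1*(/R0*R0) - (1-P)*/R0*D c) by ring.
    rewrite H in E. lra. }
  replace (-(1 - P) * c1 * (t1 + T1 - t1)) with (-1) in G by (unfold T1; field; split; apply Rgt_not_eq; lra).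
  assert (X := Rpower_pos (U (t1 + T1)) (1 - P)).
  assert (Rpower (U t1) (1 - P) <= 1).
  { assert (0 < U t1) by (apply Upos; lra).
    apply Rle_trans with (exp 0); [|rewrite exp_0; lra]. unfold Rpower. apply exp_le.
    assert (ln (U t1) <= 0) by (rewrite <- ln_1; apply ln_le'; lra).
    assert (0 <= (1-P) * (- ln (U t1))) by (apply Rmult_le_pos; lra). lra. }
  lra. Qed.

Lemma dpl_eq f g x l l' : derivable_pt_lim f x l -> l = l' -> (forall y, f y = g y) ->
  derivable_pt_lim g x l'.
Proof. intros H E F. replace g with f by (apply functional_extensionality; auto). subst; auto. Qed.

Lemma rsum_deriv (g : R -> nat -> R) (d : nat -> R) t n :
  (forall i, (i < n)%nat -> derivable_pt_lim (fun s => g s i) t (d i)) ->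
  derivable_pt_lim (fun s => rsum n (g s)) t (rsum n d).
Proof. induction n; intros H; simpl.
  - apply (dpl_eq (fct_cte 0) _ t 0 0); auto. apply derivable_pt_lim_const.
  - apply (dpl_eq ((fun s => rsum n (g s)) + (fun s => g s n))%F _ t (rsum n d + d n)); auto.
    apply derivable_pt_lim_plus. apply IHn; intros; apply H; lia. apply H; lia. Qed.

Lemma dot_nonneg n u : 0 <= dot n u u.
Proof. apply rsum_nonneg; intros; apply Rle_0_sqr. Qed.

Lemma young n u d eps : 0 < eps -> dot n u d <= eps/2 * dot n u u + /eps/2 * dot n d d.
Proof. intros He. unfold dot. rewrite <- !rsum_scal, <- rsum_add. apply rsum_le; intros i _.
  set (k := /eps). assert (eps * k = 1) by (unfold k; field; lra). assert (0 < k) by (unfold k; apply Rinv_0_lt_compat; auto).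
  assert (0 <= k * (eps * u i - d i)^2) by (apply Rmult_le_pos; [lra|apply pow2_ge_0]).
  assert (E : k * (eps * u i - d i)^2 = (eps*k) * eps * u i * u i - 2 * (eps*k) * u i * d i + k * d i * d i) by ring.
  rewrite H in E. lra. Qed.

Lemma matvec_sub n A u v i : matvec n A u i - matvec n A v i = matvec n A (vsub u v) i.
Proof. unfold matvec, vsub. rewrite <- rsum_sub. apply rsum_ext; intros; ring. Qed.

Lemma pw_scale2 y r : 0 <= y -> pw (2*y) r = Rpower 2 r * pw y r.
Proof. intros [H|H]. rewrite !pw_pos by lra. rewrite Rpower_mult_distr; auto; lra.
  subst. rewrite Rmult_0_r, pw_0; ring. Qed.

Lemma U_le y P Q : 0 <= y -> 0 < P <= 1 -> 1 <= Q -> y <= pw y P + pw y Q.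
Proof. intros [H|H] HP HQ; [|subst; rewrite !pw_0; lra].
  rewrite !pw_pos by auto. assert (X1 := Rpower_pos y P). assert (X2 := Rpower_pos y Q).
  destruct (Rle_lt_dec y 1).
  assert (y <= Rpower y P) by (apply Rpower_le1; lra). lra.
  assert (y <= Rpower y Q) by (apply Rpower_ge1; lra). lra. Qed.

Lemma sumsq_zero n e : dot n e e = 0 -> forall i, (i < n)%nat -> e i = 0.
Proof. intros H i Hi. assert (e i * e i = 0).
  { apply (rsum_zero n (fun i => e i * e i)); auto. intros; apply Rle_0_sqr. }
  destruct (Rmult_integral _ _ H0); auto. Qed.

Theorem corollary2
  (n : nat) (W1 W2 W3 : mat) (J : vec) (Phi : vec -> vec)
  (HPhi : forall x y : vec,
      vnorm n (vsub (Phi x) (Phi y)) <= vnorm n (matvec n W3 (vsub x y)))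
  (xstar : vec)
  (Heq : forall i, (i < n)%nat ->
      matvec n W1 xstar i + matvec n W2 (Phi xstar) i + J i = 0)
  (delta eps : R) (Hdelta : 0 < delta) (Heps : 0 < eps)
  (HLMI : loewner_le n
      (mscale (1/2) (madd (madd (madd W1 (transp W1))
                                (mscale eps (mmul n W2 (transp W2))))
                          (mscale (/ eps) (mmul n (transp W3) W3))))
      (mscale delta idmat))
  (eps1 eps2 p q : R) (Heps1 : 0 < eps1) (Heps2 : 0 < eps2)
  (Hp0 : 0 < p) (Hp1 : p < 1) (Hq : 1 < q)
  (Halpha : eps1 * Rpower 2 ((1 + p) / 2) - 2 * delta > 0)
  (Hbeta : eps2 * Rpower (INR n) ((1 - q) / 2) * Rpower 2 ((1 + q) / 2)
           - 2 * delta > 0)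
  (x : R -> vec)
  (Hsol : forall i, (i < n)%nat -> forall t, 0 < t ->
      derivable_pt_lim (fun s => x s i) t
        (matvec n W1 (x t) i + matvec n W2 (Phi (x t)) i + J i
         - eps1 * sig p (vsub (x t) xstar) i
         - eps2 * sig q (vsub (x t) xstar) i))
  (Hcont0 : forall i, (i < n)%nat -> forall e, 0 < e ->
      exists d, 0 < d /\ forall s, 0 <= s < d -> Rabs (x s i - x 0 i) < e) :
  forall t, 2 / ((eps1 * Rpower 2 ((1 + p) / 2) - 2 * delta) * (1 - p))
            + 2 / ((eps2 * Rpower (INR n) ((1 - q) / 2) * Rpower 2 ((1 + q) / 2)
                    - 2 * delta) * (q - 1)) <= t ->
  forall i, (i < n)%nat -> x t i = xstar i.
Proof.
  set (a := eps1 * Rpower 2 ((1 + p) / 2)) in *.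
  set (b := eps2 * Rpower (INR n) ((1 - q) / 2) * Rpower 2 ((1 + q) / 2)) in *.
  set (P := (1 + p) / 2). set (Q := (1 + q) / 2).
  set (e := fun t => vsub (x t) xstar).
  set (rhs := fun t i => matvec n W1 (x t) i + matvec n W2 (Phi (x t)) i + J i
         - eps1 * sig p (vsub (x t) xstar) i - eps2 * sig q (vsub (x t) xstar) i).
  set (U := fun t => / 2 * dot n (e t) (e t)).
  set (Dv := fun t => dot n (e t) (rhs t)).
  assert (HU : forall t, 0 < t -> derivable_pt_lim U t (Dv t)).
  { intros t Ht. unfold U, Dv, dot.
    apply (dpl_eq (mult_real_fct (/2) (fun s => rsum n (fun i => e s i * e s i))) _ t
      (/2 * rsum n (fun i => 2 * (e t i * rhs t i)))).
    apply derivable_pt_lim_scal. apply rsum_deriv. intros i Hi.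
    assert (Hf : derivable_pt_lim (fun s => x s i - xstar i) t (rhs t i)).
    { apply (dpl_eq (minus_fct (fun s => x s i) (fct_cte (xstar i))) _ t (rhs t i - 0)).
      apply derivable_pt_lim_minus; [apply Hsol; auto|apply derivable_pt_lim_const].
      ring. intros; reflexivity. }
    assert (Hm := derivable_pt_lim_mult _ _ t _ _ Hf Hf).
    eapply dpl_eq. exact Hm. unfold e, vsub; ring. intros; reflexivity.
    rewrite rsum_scal. field. intros; reflexivity. }
  assert (HD : forall t, 0 < t -> Dv t <= 2*delta*U t - a * pw (U t) P - b * pw (U t) Q).
  { intros t Ht. set (ev := e t). set (d := vsub (Phi (x t)) (Phi xstar)).
    assert (Hrhs : forall i, (i < n)%nat -> rhs t i = matvec n W1 ev i + matvec n W2 d i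
        - eps1 * sigr p (ev i) - eps2 * sigr q (ev i)).
    { intros i Hi. unfold ev, d, e. rewrite <- !matvec_sub. unfold rhs, sig.
      specialize (Heq i Hi). lra. }
    assert (HDv : Dv t = dot n ev (matvec n W1 ev) + dot n ev (matvec n W2 d)
       - eps1 * rsum n (fun i => pw (ev i * ev i) P) - eps2 * rsum n (fun i => pw (ev i * ev i) Q)).
    { unfold Dv, dot. rewrite <- !rsum_scal, <- rsum_add, <- !rsum_sub. fold ev.
      apply rsum_ext; intros i Hi. rewrite Hrhs by auto. unfold P, Q. rewrite <- !esig. ring. }
    set (u := matvec n (transp W2) ev). set (w := matvec n W3 ev).
    assert (L1 : qf n (madd (madd (madd W1 (transp W1)) (mscale eps (mmul n W2 (transp W2))))
        (mscale (/ eps) (mmul n (transp W3) W3))) ev = 2 * qf n W1 ev + eps * dot n u u + /eps * dot n w w).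
    { rewrite (qf_lin2 _ _ (madd (madd W1 (transp W1)) (mscale eps (mmul n W2 (transp W2)))) (mmul n (transp W3) W3) 1 (/eps))
        by (intros; unfold madd, mscale; ring).
      rewrite (qf_lin2 _ _ (madd W1 (transp W1)) (mmul n W2 (transp W2)) 1 eps) by (intros; unfold madd, mscale; ring).
      rewrite (qf_lin2 _ _ W1 (transp W1) 1 1) by (intros; unfold madd; ring).
      rewrite qf_transp, !qf_mmul. change (transp (transp W3)) with W3. fold u w. ring. }
    assert (L2 := HLMI ev). change (0 <= qf n (fun i j => mscale delta idmat i j - mscale (1 / 2)
       (madd (madd (madd W1 (transp W1)) (mscale eps (mmul n W2 (transp W2))))
          (mscale (/ eps) (mmul n (transp W3) W3))) i j) ev) in L2.
    rewrite (qf_lin2 _ _ idmat (madd (madd (madd W1 (transp W1)) (mscale eps (mmul n W2 (transp W2))))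
          (mscale (/ eps) (mmul n (transp W3) W3))) delta (-(1/2))) in L2 by (intros; unfold mscale; ring).
    rewrite L1, qf_id in L2. unfold qf in L2.
    assert (Y : dot n ev (matvec n W2 d) <= eps/2 * dot n u u + /eps/2 * dot n d d).
    { rewrite dot_transp. apply young; auto. }
    assert (Ph : dot n d d <= dot n w w).
    { apply sqrt_le_0; try apply dot_nonneg. apply HPhi. }
    assert (Ie : 0 < /eps) by (apply Rinv_0_lt_compat; auto).
    assert (Ph2 : /eps/2 * dot n d d <= /eps/2 * dot n w w) by (apply Rmult_le_compat_l; lra).
    assert (Eee : dot n ev ev = 2 * U t) by (unfold U; fold ev; field).
    assert (Unn : 0 <= U t) by (unfold U; assert (X := dot_nonneg n (e t)); lra).
    assert (C1 := claim1 n (fun i => ev i * ev i) P (fun i _ => Rle_0_sqr (ev i)) ltac:(unfold P; lra)).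
    assert (C2 := claim2 n (fun i => ev i * ev i) Q (fun i _ => Rle_0_sqr (ev i)) ltac:(unfold Q; lra)).
    change (rsum n (fun i => ev i * ev i)) with (dot n ev ev) in C1, C2.
    rewrite Eee, pw_scale2 in C1, C2 by auto.
    replace (1 - Q) with ((1 - q) / 2) in C2 by (unfold Q; field).
    assert (M1 : eps1 * (Rpower 2 P * pw (U t) P) <= eps1 * rsum n (fun i => pw (ev i * ev i) P))
      by (apply Rmult_le_compat_l; lra).
    assert (M2 : eps2 * (Rpower (INR n) ((1 - q) / 2) * (Rpower 2 Q * pw (U t) Q)) <= eps2 * rsum n (fun i => pw (ev i * ev i) Q))
      by (apply Rmult_le_compat_l; lra).
    assert (Ea : a * pw (U t) P = eps1 * (Rpower 2 P * pw (U t) P)) by (unfold a, P; ring).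
    assert (Eb : b * pw (U t) Q = eps2 * (Rpower (INR n) ((1 - q) / 2) * (Rpower 2 Q * pw (U t) Q))) by (unfold b, Q; ring).
    rewrite HDv, Ea, Eb. rewrite Eee in L2. nra. }
  set (c1 := a - 2 * delta). set (c2 := b - 2 * delta).
  assert (Unn : forall t, 0 <= U t) by (intros; unfold U; assert (X := dot_nonneg n (e t)); lra).
  assert (HPr : 0 < P <= 1) by (unfold P; lra). assert (HQr : 1 <= Q) by (unfold Q; lra).
  assert (HD' : forall t, 0 < t -> Dv t <= - c1 * pw (U t) P - c2 * pw (U t) Q).
  { intros t Ht. assert (X := HD t Ht). assert (Y := U_le (U t) P Q (Unn t) HPr HQr).
    unfold c1, c2. nra. }
  assert (Comp := comparison U Dv c1 c2 P Q ltac:(unfold c1; lra) ltac:(unfold c2; lra)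
     ltac:(unfold P; lra) ltac:(unfold Q; lra) HU (fun t _ => Unn t)
     ltac:(intros t Ht; assert (X := HD' t Ht); assert (Y := pw_nonneg (U t) Q); unfold c2 in *; nra)
     ltac:(intros t Ht; assert (X := HD' t Ht); assert (Y := pw_nonneg (U t) P); unfold c1 in *; nra)).
  set (Tm := 2 / ((a - 2 * delta) * (1 - p)) + 2 / ((b - 2 * delta) * (q - 1))).
  assert (ETm : Tm = 1/(c2*(Q-1)) + 1/(c1*(1-P))).
  { unfold Tm, c1, c2, P, Q. field. repeat split; apply Rgt_not_eq; lra. }
  assert (HTm : 0 < Tm).
  { rewrite ETm. assert (0 < 1/(c2*(Q-1))) by (apply Rdiv_lt_0_compat; [lra|apply Rmult_lt_0_compat; unfold c2, Q in *; lra]).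
    assert (0 < 1/(c1*(1-P))) by (apply Rdiv_lt_0_compat; [lra|apply Rmult_lt_0_compat; unfold c1, P in *; lra]). lra. }
  assert (Uz : forall t, Tm < t -> U t = 0).
  { intros t Ht. replace t with (t - Tm + 1/(c2*(Q-1)) + 1/(c1*(1-P))) by (rewrite ETm; ring).
    apply Comp. lra. }
  intros t Ht i Hi. fold Tm in Ht.
  assert (UT : U t = 0).
  { destruct Ht as [Hlt|Ee]; [apply Uz; auto|]. subst t.
    destruct (Unn Tm) as [Pos|Z]; [|auto]. exfalso.
    assert (Hc := derivable_continuous_pt U Tm (exist _ (Dv Tm) (HU Tm HTm))).
    destruct (Hc (U Tm) ltac:(lra)) as [alp [Halp Hd]].
    assert (Hs := Hd (Tm + alp/2) ltac:(split; [split; [exact I|lra]|simpl; unfold R_dist; rewrite Rabs_right; lra])).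
    simpl in Hs. unfold R_dist in Hs. rewrite Uz in Hs by lra.
    rewrite Rabs_left in Hs; lra. }
  assert (E0 : dot n (e t) (e t) = 0) by (unfold U in UT; lra).
  assert (X := sumsq_zero n (e t) E0 i Hi). unfold e, vsub in X. lra.
Qed.
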